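(* Let $x=(x_1,\dots,x_n)$ be a stochastic vector ($x_j\ge0$, $\sum_j x_j=1$) and let $P(x)=\prod_{k=1}^n(1-x_k)^{1-x_k}$. Then (i) $\max_j x_j/P(x)\le e^{1/e}$; (ii) $\sum_{j=1}^n\psi_a\!\Big(\dfrac{x_j}{2\,P(x)}\Big)\le 1$, where $\psi_a(t)=1-(1-t)a^t$ and $a$ is the unique positive root of $\frac{1-\ln a}{a}=\frac1e$.
   Context: Convention: $0^0=1$. *)

(* Defs.v *)
From Stdlib Require Import Reals.
Open Scope R_scope.

Fixpoint sumR (n : nat) (f : nat -> R) : R :=
  match n with O => 0 | S m => sumR m f + f m end.
Fixpoint prodR (n : nat) (f : nat -> R) : R :=
  match n with O => 1 | S m => prodR m f * f m end.

(* real power b^e for b >= 0, with the convention 0^0 = 1 (and 0^e = 0 for e <> 0) *)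
Definition rpow (b e : R) : R :=
  if Req_EM_T b 0 then (if Req_EM_T e 0 then 1 else 0) else Rpower b e.

(* P(x) = prod_{k=1}^n (1 - x_k)^(1 - x_k); indices shifted to 0..n-1 *)
Definition Pfun (n : nat) (x : nat -> R) : R :=
  prodR n (fun k => rpow (1 - x k) (1 - x k)).

Definition psi (a t : R) : R := 1 - (1 - t) * Rpower a t.

Definition stochastic (n : nat) (x : nat -> R) : Prop :=
  (forall j, (j < n)%nat -> 0 <= x j) /\ sumR n x = 1.

(* Main.v *)
From Stdlib Require Import Reals Lra Lia Psatz.
From Stdlib Require Import Arith.Factorial.
Open Scope R_scope.
From Coquelicot Require Import Coquelicot.
Require Import Defs.
Open Scope R_scope.
Lemma expm1_lb : 0.3678 <= exp (-1).
Proof.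
  unfold exp; case (exist_exp (-1)) as (?,e); simpl in |- *;
    unfold exp_in in e;
      assert (H := alternated_series_ineq (fun i:nat => / INR (fact i)) x 3).
  cut
    (sum_f_R0 (tg_alt (fun i:nat => / INR (fact i))) (S (2 * 3)) <= x <=
      sum_f_R0 (tg_alt (fun i:nat => / INR (fact i))) (2 * 3)).
  { intro; elim H0; clear H0; intros H0 _; simpl in H0; unfold tg_alt in H0;
      simpl in H0. eapply Rle_trans; [|apply H0]. simpl. lra. }
  apply H.
  - unfold Un_decreasing; intros;
      apply Rmult_le_reg_l with (INR (fact n)).
    { apply INR_fact_lt_0. }
    apply Rmult_le_reg_l with (INR (fact (S n))).
    { apply INR_fact_lt_0. }
    rewrite Rinv_r.
    2:{ apply INR_fact_neq_0. }
    rewrite Rmult_1_r; rewrite Rmult_comm; rewrite Rmult_assoc;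
      rewrite Rinv_l.
    2:{ apply INR_fact_neq_0. }
    rewrite Rmult_1_r; apply le_INR; apply fact_le; apply Nat.le_succ_diag_r.
  - assert (H0 := cv_speed_pow_fact 1); unfold Un_cv; unfold Un_cv in H0;
      intros; elim (H0 _ H1); intros; exists x0; intros;
      unfold Rdist in H2; unfold Rdist;
      replace (/ INR (fact n)) with (1 ^ n / INR (fact n));auto.
    unfold Rdiv; rewrite pow1; rewrite Rmult_1_l; reflexivity.
  - unfold infinite_sum in e; unfold Un_cv, tg_alt; intros; elim (e _ H0);
      intros; exists x0; intros;
      replace (sum_f_R0 (fun i:nat => (-1) ^ i * / INR (fact i)) n) with
      (sum_f_R0 (fun i:nat => / INR (fact i) * (-1) ^ i) n);auto.
    apply sum_eq; intros; apply Rmult_comm.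
Qed.
Lemma D0 (s : R) : 0 <= s -> 2 * s <= exp s - exp (- s).
Proof.
intros Hs. destruct (Req_dec s 0) as [->|Hs0].
{ rewrite Ropp_0, exp_0; lra. }
destruct (MVT_cor2 (fun s => exp s - exp (-s) - 2 * s) (fun s => exp s + exp (-s) - 2) 0 s) as [c [Hc _]].
- lra.
- intros c _. apply is_derive_Reals. auto_derive; [easy|ring].
- rewrite Ropp_0, exp_0 in Hc.
  assert (H1 : exp c * exp (-c) = 1) by (rewrite <- exp_plus; replace (c + - c) with 0 by ring; apply exp_0).
  assert (0 < exp c) by apply exp_pos. assert (0 < exp (-c)) by apply exp_pos.
  assert (exp c * (exp c + exp (-c) - 2) = (exp c - 1)^2) by (simpl; nra).
  assert (0 <= exp c + exp (-c) - 2). { apply Rmult_le_reg_l with (exp c); auto. rewrite H2, Rmult_0_r. apply pow2_ge_0. }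
  assert (0 <= (exp c + exp (-c) - 2) * (s - 0)) by (apply Rmult_le_pos; lra). lra.
Qed.

Lemma exp_le' x y : x <= y -> exp x <= exp y.
Proof. intros [H|H]; [left; apply exp_increasing; auto| subst; lra]. Qed.

Lemma sq_step u c : 0 <= c -> c <= exp (u/2) -> c * c <= exp u.
Proof.
  intros H0 H1. replace u with (u/2 + u/2) by field. rewrite exp_plus.
  assert (0 <= c * (exp (u/2) - c)) by (apply Rmult_le_pos; lra). nra.
Qed.

Lemma exp575 : 1 <= (23/40) * exp (23/40).
Proof.
  assert (H0 := exp_ineq1_le ((23/40)/2/2/2/2/2)).
  assert (H1 := sq_step ((23/40)/2/2/2/2) 1.0179 ltac:(lra) ltac:(lra)).
  assert (H2 := sq_step ((23/40)/2/2/2) 1.0361 ltac:(lra) ltac:(lra)).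
  assert (H3 := sq_step ((23/40)/2/2) 1.0735 ltac:(lra) ltac:(lra)).
  assert (H4 := sq_step ((23/40)/2) 1.1524 ltac:(lra) ltac:(lra)).
  assert (H5 := sq_step (23/40) 1.3280 ltac:(lra) ltac:(lra)).
  lra.
Qed.

Lemma ln_le z : 0 < z -> ln z <= z - 1.
Proof. intros Hz. assert (H := exp_ineq1_le (ln z)). rewrite exp_ln in H; lra. Qed.

Lemma ylny_B y : 0 < y -> - / exp 1 <= y * ln y.
Proof.
  intros Hy. assert (He := exp_pos 1).
  assert (H := ln_le (/ (exp 1 * y)) ltac:(apply Rinv_0_lt_compat; nra)).
  rewrite ln_Rinv, ln_mult, ln_exp in H by nra.
  assert (y * (/ (exp 1 * y)) = / exp 1) by (field; lra).
  nra.
Qed.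

Lemma ylny_C y : 0 < y -> y <= 1 -> (y * y - 1) / 2 <= y * ln y.
Proof.
  intros Hy Hy1. set (s := - ln y).
  assert (Hs : 0 <= s). { unfold s. assert (ln y <= 0). { destruct Hy1 as [Hy1| ->]. left. rewrite <- ln_1. apply ln_increasing; lra. rewrite ln_1; lra. } lra. }
  assert (Ey : y = exp (- s)) by (unfold s; rewrite Ropp_involutive, exp_ln; auto).
  assert (Ly : ln y = - s) by (unfold s; ring).
  rewrite Ly. rewrite Ey.
  assert (H1 : exp s * exp (-s) = 1) by (rewrite <- exp_plus; replace (s + - s) with 0 by ring; apply exp_0).
  assert (HD := D0 s Hs).
  assert (0 < exp (-s)) by apply exp_pos.
  assert (exp (-s) * (2 * s) <= exp (-s) * (exp s - exp (-s))) by (apply Rmult_le_compat_l; lra).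
  nra.
Qed.

Lemma rpow_ge y c : 0 <= y <= 1 -> c <= 0 -> (0 < y -> c <= y * ln y) -> exp c <= rpow y y.
Proof.
  intros Hy Hc H. unfold rpow. destruct (Req_EM_T y 0) as [E|E].
  - destruct (Req_EM_T y 0); [|contradiction]. rewrite <- exp_0. apply exp_le'; auto.
  - unfold Rpower. apply exp_le'. apply H. lra.
Qed.

Lemma sumR_ext n f g : (forall k, (k < n)%nat -> f k = g k) -> sumR n f = sumR n g.
Proof. induction n; simpl; intros H; auto. rewrite IHn by (intros; apply H; lia). rewrite H by lia. auto. Qed.
Lemma prodR_ext n f g : (forall k, (k < n)%nat -> f k = g k) -> prodR n f = prodR n g.
Proof. induction n; simpl; intros H; auto. rewrite IHn by (intros; apply H; lia). rewrite H by lia. auto. Qed.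
Lemma sumR_le n f g : (forall k, (k < n)%nat -> f k <= g k) -> sumR n f <= sumR n g.
Proof. induction n; simpl; intros H; [lra|]. assert (H1 := H n ltac:(lia)). assert (sumR n f <= sumR n g) by (apply IHn; intros; apply H; lia). lra. Qed.
Lemma sumR_lin n f g a b : sumR n (fun k => a * f k + b * g k) = a * sumR n f + b * sumR n g.
Proof. induction n; simpl; [ring|]. rewrite IHn; ring. Qed.
Lemma sumR_nonneg n f : (forall k, (k < n)%nat -> 0 <= f k) -> 0 <= sumR n f.
Proof. induction n; simpl; intros H; [lra|]. assert (H1 := H n ltac:(lia)). assert (0 <= sumR n f) by (apply IHn; intros; apply H; lia). lra. Qed.
Lemma sumR_term n f j : (forall k, (k < n)%nat -> 0 <= f k) -> (j < n)%nat -> f j <= sumR n f.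
Proof.
  induction n; simpl; intros H Hj; [lia|].
  destruct (Nat.eq_dec j n) as [->|Hn].
  - assert (0 <= sumR n f) by (apply sumR_nonneg; intros; apply H; lia). lra.
  - assert (f j <= sumR n f) by (apply IHn; [intros; apply H; lia| lia]). assert (H1 := H n ltac:(lia)). lra.
Qed.
Lemma sumR_skip n f j : (j < n)%nat -> sumR n (fun k => if Nat.eqb k j then 0 else f k) = sumR n f - f j.
Proof.
  induction n; simpl; intros Hj; [lia|].
  destruct (Nat.eq_dec j n) as [->|Hn].
  - rewrite Nat.eqb_refl. rewrite (sumR_ext n _ f). ring.
    intros k Hk. destruct (Nat.eqb_spec k n); [lia|auto].
  - rewrite IHn by lia. destruct (Nat.eqb_spec n j); [lia|]. ring.
Qed.
Lemma prodR_split n f j : (j < n)%nat -> prodR n f = f j * prodR n (fun k => if Nat.eqb k j then 1 else f k).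
Proof.
  induction n; simpl; intros Hj; [lia|].
  destruct (Nat.eq_dec j n) as [->|Hn].
  - rewrite Nat.eqb_refl. rewrite (prodR_ext n (fun k => if Nat.eqb k n then 1 else f k) f). ring.
    intros k Hk. destruct (Nat.eqb_spec k n); [lia|auto].
  - rewrite IHn by lia. destruct (Nat.eqb_spec n j); [lia|]. ring.
Qed.
Lemma prodR_nonneg n f : (forall k, (k < n)%nat -> 0 <= f k) -> 0 <= prodR n f.
Proof. induction n; simpl; intros H; [lra|]. apply Rmult_le_pos; [apply IHn; intros; apply H; lia| apply H; lia]. Qed.
Lemma prodR_mono n f g : (forall k, (k < n)%nat -> 0 <= g k <= f k) -> prodR n g <= prodR n f.
Proof.
  induction n; simpl; intros H; [lra|].
  assert (H1 := H n ltac:(lia)).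
  assert (0 <= prodR n g) by (apply prodR_nonneg; intros; apply H; lia).
  assert (prodR n g <= prodR n f) by (apply IHn; intros; apply H; lia).
  apply Rmult_le_compat; lra.
Qed.
Lemma prodR_exp n h : prodR n (fun k => exp (h k)) = exp (sumR n h).
Proof. induction n; simpl; [rewrite exp_0; auto|]. rewrite IHn, exp_plus; auto. Qed.

Theorem lemma4p3 (n : nat) (x : nat -> R) (a : R) :
  stochastic n x ->
  0 < a -> (1 - ln a) / a = / exp 1 ->
  (forall j, (j < n)%nat -> x j / Pfun n x <= exp (/ exp 1)) /\
  sumR n (fun j => psi a (x j / (2 * Pfun n x))) <= 1.
Proof.
  intros [Hx Hs] Ha Heq.
  assert (Hx1 : forall k, (k < n)%nat -> x k <= 1).
  { intros k Hk. rewrite <- Hs. apply sumR_term; auto. }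
  set (S := sumR n (fun k => x k * x k)).
  assert (HS0 : 0 <= S) by (apply sumR_nonneg; intros; specialize (Hx k H); nra).
  assert (HP : exp (-1) * exp (S / 2) <= Pfun n x).
  { rewrite <- exp_plus. unfold Pfun.
    replace (-1 + S / 2) with (sumR n (fun k => (-1) * x k + (1/2) * (x k * x k))).
    2:{ rewrite sumR_lin. fold S. rewrite Hs. field. }
    rewrite <- prodR_exp. apply prodR_mono. intros k Hk.
    specialize (Hx k Hk). specialize (Hx1 k Hk).
    split; [left; apply exp_pos|].
    apply rpow_ge; [lra|nra|]. intros Hy.
    assert (H := ylny_C (1 - x k) Hy ltac:(lra)). nra. }
  assert (HE := expm1_lb).
  assert (HS2 : 1 + S / 2 <= exp (S / 2)) by apply exp_ineq1_le.
  assert (HQ : (3678/10000) * (1 + S / 2) <= Pfun n x).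
  { eapply Rle_trans; [|apply HP]. apply Rmult_le_compat; lra. }
  assert (HP0 : 0 < Pfun n x) by lra.
  split.
  - intros j Hj. specialize (Hx j Hj) as Hxj. specialize (Hx1 j Hj) as Hxj1.
    assert (Hsplit := prodR_split n (fun k => rpow (1 - x k) (1 - x k)) j Hj).
    assert (Hfj : exp (- / exp 1) <= rpow (1 - x j) (1 - x j)).
    { apply rpow_ge; [lra| |].
      - assert (0 < / exp 1) by (apply Rinv_0_lt_compat, exp_pos). lra.
      - intros Hy. apply ylny_B; auto. }
    assert (HR : exp (- (1 - x j)) <= prodR n (fun k => if Nat.eqb k j then 1 else rpow (1 - x k) (1 - x k))).
    { replace (- (1 - x j)) with (sumR n (fun k => if Nat.eqb k j then 0 else (-1) * x k + 0 * x k)).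
      2:{ rewrite sumR_skip by auto. rewrite sumR_lin, Hs. ring. }
      rewrite <- prodR_exp. apply prodR_mono. intros k Hk.
      destruct (Nat.eqb k j).
      - rewrite exp_0. lra.
      - specialize (Hx k Hk). specialize (Hx1 k Hk). split; [left; apply exp_pos|].
        apply rpow_ge; [lra|lra|]. intros Hy.
        assert (H := ylny_C (1 - x k) Hy ltac:(lra)). nra. }
    assert (HPj : exp (- / exp 1) * exp (- (1 - x j)) <= Pfun n x).
    { unfold Pfun. rewrite Hsplit. apply Rmult_le_compat; auto; left; apply exp_pos. }
    assert (Hxe : x j <= exp (x j - 1)) by (assert (H := exp_ineq1_le (x j - 1)); lra).
    apply Rmult_le_reg_r with (Pfun n x); auto.
    unfold Rdiv. rewrite Rmult_assoc, Rinv_l, Rmult_1_r by lra.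
    eapply Rle_trans; [apply Hxe|].
    replace (exp (x j - 1)) with (exp (/ exp 1) * (exp (- / exp 1) * exp (- (1 - x j)))).
    2:{ rewrite <- !exp_plus. f_equal. ring. }
    apply Rmult_le_compat_l; [left; apply exp_pos| auto].
  -
    set (m := 1 - ln a).
    assert (Hm : m = exp (- m)).
    { unfold m. replace (- (1 - ln a)) with (ln a + (-1)) by ring.
      rewrite exp_plus, exp_ln by auto. replace (exp (-1)) with (/ exp 1) by (rewrite <- exp_Ropp; f_equal; lra).
      assert (H := exp_pos 1).
      apply (Rmult_eq_compat_r a) in Heq. unfold Rdiv in Heq.
      rewrite Rmult_assoc, Rinv_l, Rmult_1_r in Heq by lra. rewrite Heq. ring. }
    assert (Hm1 : m <= (23/40)).
    { destruct (Rle_lt_dec m (23/40)) as [|Hlt]; auto. exfalso.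
      assert (H1 := exp_increasing (- m) (- (23/40)) ltac:(lra)).
      assert (H2 := exp575). replace (exp (- (23/40))) with (/ exp (23/40)) in H1 by (rewrite <- exp_Ropp; f_equal; lra).
      assert (H3 := exp_pos (23/40)).
      assert (/ exp (23/40) <= (23/40)).
      { assert (H4 : / exp (23/40) * 1 <= / exp (23/40) * ((23/40) * exp (23/40))).
        { apply Rmult_le_compat_l; auto. left; apply Rinv_0_lt_compat; auto. }
        replace (/ exp (23/40) * ((23/40) * exp (23/40))) with (23/40) in H4 by (field; lra). lra. }
      lra. }
    assert (Hpsi : forall t, 0 <= t <= 1 -> psi a t <= (23/40) * t + (17/40) * (t * t)).
    { intros t Ht. unfold psi, Rpower.
      assert (H := exp_ineq1_le (t * ln a)).
      assert ((1 - t) * (1 + t * ln a) <= (1 - t) * exp (t * ln a)) by (apply Rmult_le_compat_l; lra).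
      assert (0 <= t * (1 - t)) by nra.
      assert (t * (1 - t) * (ln a - (17/40)) >= 0) by (apply Rle_ge, Rmult_le_pos; unfold m in Hm1; lra).
      nra. }
    set (P := Pfun n x) in *.
    eapply Rle_trans.
    { apply sumR_le with (g := fun j => ((23/40) / (2 * P)) * x j + ((17/40) / (4 * P * P)) * (x j * x j)).
      intros k Hk. eapply Rle_trans; [apply Hpsi|].
      - specialize (Hx k Hk) as Hxk. specialize (Hx1 k Hk) as Hxk1. split.
        + apply Rmult_le_pos; [lra| left; apply Rinv_0_lt_compat; lra].
        + assert (x k * x k <= S) by (apply (sumR_term n (fun k => x k * x k)); auto; intros; specialize (Hx k0 H); nra).
          apply Rmult_le_reg_r with (2 * P); [lra|]. unfold Rdiv. rewrite Rmult_assoc, Rinv_l, Rmult_1_r by lra.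
          nra.
      - right. field. lra. }
    rewrite sumR_lin. fold S. rewrite Hs.
    assert (Hpos : 0 <= (P - (3678/10000) * (1 + S / 2)) * (P + (3678/10000) * (1 + S / 2) - (23/80))) by (apply Rmult_le_pos; nra).
    assert (Hpoly : (23/80) * P + (17/160) * S <= P * P) by nra.
    replace ((23/40) / (2 * P) * 1 + (17/40) / (4 * P * P) * S) with (((23/80) * P + (17/160) * S) / (P * P)).
 2:{ field. lra. }
    apply Rmult_le_reg_r with (P * P); [nra|]. unfold Rdiv. rewrite Rmult_assoc, Rinv_l by nra. lra.
Qed.
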